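(* Let $\xi$ be a real random variable with $\mathbb{E}\xi^2=\infty$ and let $M>0$. Then there exists $m_0$, depending only on $M$ and the distribution of $\xi$, such that for every $m>m_0$, if $B$ is an $m\times m$ random matrix whose entries are i.i.d. copies of $\xi$, then $$\|B\|\ge M\sqrt m$$ with probability at least $1-\exp(-M^2m)$.
   Context: $\|\cdot\|$ denotes the operator norm (Euclidean norm to Euclidean norm). *)

(* Defs.v *)
From HB Require Import structures.
From mathcomp Require Import all_boot all_order all_algebra.
From mathcomp Require Import all_classical all_reals all_analysis.
Set Implicit Arguments. Unset Strict Implicit. Unset Printing Implicit Defensive.
Import Order.TTheory GRing.Theory Num.Theory.
Import numFieldNormedType.Exports.
Local Open Scope classical_set_scope.
Local Open Scope ring_scope.

Definition eucl_norm (R : realType) (n : nat) (v : 'cV[R]_n) : R :=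
  Num.sqrt (\sum_(i < n) (v i ord0) ^+ 2).

Definition opnorm (R : realType) (m n : nat) (A : 'M[R]_(m, n)) : R :=
  sup [set eucl_norm (A *m v) | v in [set v : 'cV[R]_n | eucl_norm v <= 1]].

(* Mutual independence of a finite family of real random variables:
   product rule for every choice of Borel sets (choosing setT for some
   indices gives the product rule over every subfamily). *)
Definition mutually_independent (d : measure_display) (T : measurableType d)
  (R : realType) (P : probability T R) (I : finType) (X : I -> T -> R) : Prop :=
  forall A : I -> set R, (forall i, measurable (A i)) ->
    P (\bigcap_(i in [set: I]) (X i @^-1` A i)) =
    (\prod_(i : I) P (X i @^-1` A i))%E.

(* Main.v *)
Require Import Defs.
From HB Require Import structures.
From mathcomp Require Import all_boot all_order all_algebra.
From mathcomp Require Import all_classical all_reals all_analysis.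
From mathcomp Require Import ring lra.
Import Order.TTheory GRing.Theory Num.Theory.
Import numFieldNormedType.Exports.
Local Open Scope classical_set_scope.
Local Open Scope ring_scope.
Set Implicit Arguments. Unset Strict Implicit. Unset Printing Implicit Defensive.

Section Det.
Variable R : realType.

Definition sqsum (n : nat) (v : 'cV[R]_n) : R := \sum_(i < n) (v i ord0) ^+ 2.

Lemma sqsum_ge0 n (v : 'cV[R]_n) : 0 <= sqsum v.
Proof. by apply: sumr_ge0 => i _; rewrite sqr_ge0. Qed.

Lemma eucl_normE n (v : 'cV[R]_n) : eucl_norm v = Num.sqrt (sqsum v).
Proof. by []. Qed.

Lemma eucl_le1 n (v : 'cV[R]_n) : eucl_norm v <= 1 -> sqsum v <= 1.
Proof.
by rewrite eucl_normE -{1}sqrtr1 ler_sqrt.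
Qed.

Lemma le1_eucl n (v : 'cV[R]_n) : sqsum v <= 1 -> eucl_norm v <= 1.
Proof.
by rewrite eucl_normE -{2}sqrtr1 ler_sqrt.
Qed.

Lemma entry_le_sqsum n (v : 'cV[R]_n) k : v k ord0 ^+ 2 <= sqsum v.
Proof.
rewrite /sqsum (bigD1 k) //= lerDl; apply: sumr_ge0 => i _; exact: sqr_ge0.
Qed.

Lemma entry_le1 n (v : 'cV[R]_n) k : sqsum v <= 1 -> `|v k ord0| <= 1.
Proof.
move=> h; have := le_trans (entry_le_sqsum v k) h.
rewrite ler_norml => h2; apply/andP; split; nra.
Qed.

Definition rowabs m n (B : 'M[R]_(m, n)) i := \sum_k `|B i k|.

Lemma mulmx_entry_le m n (B : 'M[R]_(m, n)) v i :
  sqsum v <= 1 -> `|(B *m v) i ord0| <= rowabs B i.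
Proof.
move=> hv; rewrite mxE; apply: (le_trans (ler_norm_sum _ _ _)).
apply: ler_sum => k _; rewrite normrM.
by rewrite -{2}[`|B i k|]mulr1 ler_wpM2l // entry_le1.
Qed.

Definition opset m n (B : 'M[R]_(m, n)) :=
  [set eucl_norm (B *m v) | v in [set v : 'cV[R]_n | eucl_norm v <= 1]].

Lemma opset_has_sup m n (B : 'M[R]_(m, n)) : has_sup (opset B).
Proof.
split.
  exists (eucl_norm (B *m 0)); exists 0 => //=.
  rewrite /= eucl_normE /sqsum big1 ?sqrtr0 // => i _; by rewrite mxE expr0n.
exists (Num.sqrt (\sum_i (rowabs B i) ^+ 2)) => _ [v /= hv <-].
rewrite eucl_normE ler_sqrt; last by apply: sumr_ge0 => i _; rewrite sqr_ge0.
apply: ler_sum => i _.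
have h := mulmx_entry_le B i (eucl_le1 hv).
rewrite -real_normK ?num_real //; apply: lerXn2r => //; rewrite ?nnegrE //.
exact: le_trans h.
Qed.

Lemma opnorm_ge m n (B : 'M[R]_(m, n)) v :
  eucl_norm v <= 1 -> eucl_norm (B *m v) <= opnorm B.
Proof.
move=> hv; apply: sup_upper_bound; first exact: opset_has_sup.
by exists v.
Qed.

Lemma opnorm_ge0 m n (B : 'M[R]_(m, n)) : 0 <= opnorm B.
Proof.
apply: le_trans (opnorm_ge B (v:=0) _); first exact: sqrtr_ge0.
rewrite eucl_normE /sqsum big1 ?sqrtr0 // => i _; by rewrite mxE expr0n.
Qed.

Lemma opnorm_col m n (B : 'M[R]_(m, n)) j :
  Num.sqrt (\sum_i B i j ^+ 2) <= opnorm B.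
Proof.
have -> : \sum_i B i j ^+ 2 = sqsum (B *m delta_mx j 0).
  by apply: eq_bigr => i _; rewrite -colE mxE.
apply: opnorm_ge; apply: le1_eucl; rewrite /sqsum (bigD1 j) //= big1.
  by rewrite mxE !eqxx /= expr1n addr0.
by move=> i hij; rewrite mxE (negbTE hij) /= expr0n.
Qed.

End Det.
Section Det2.
Variable R : realType.
Local Notation rr := (@ratr R).

Lemma small_inv (e : R) : 0 < e -> exists k : nat, (k.+1%:R)^-1 < e.
Proof.
move=> e0; exists (Num.trunc (e^-1)).
have h := truncnS_gt (e^-1).
rewrite -[X in _ < X]invrK ltf_pV2 ?posrE ?invr_gt0 //.
Qed.

Lemma rat_approx (x eta : R) : 0 < eta ->
  exists q : rat, `|rr q| <= `|x| /\ `|rr q - x| <= eta.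
Proof.
move=> he.
have pos : forall y : R, 0 < y -> exists q : rat, 0 <= rr q <= y /\ y - rr q <= eta.
  move=> y y0.
  have : Num.max 0 (y - eta) < y by rewrite gt_max y0 /= ltrBlDr ltrDl.
  move=> /rat_in_itvoo [q]; rewrite in_itv /= => /andP [h1 h2].
  exists q; move: h1; rewrite gt_max => /andP [h1 h3].
  split; first by rewrite (ltW h1) (ltW h2).
  by rewrite lerBlDr -lerBlDl ltW.
have [x0|x0|->] := ltgtP x 0.
- have [q [/andP [q0 qx] qe]] : exists q : rat, (0 <= rr q <= - x) /\ - x - rr q <= eta.
    by apply: pos; rewrite oppr_gt0.
  exists (- q); rewrite rmorphN normrN /=; split.
    by rewrite ger0_norm // ltr0_norm.
  rewrite ler_norml; apply/andP; split; lra.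
- have [q [/andP [q0 qx] qe]] := pos x x0.
  exists q; rewrite ger0_norm // gtr0_norm //; split => //.
  rewrite ler_norml; apply/andP; split; lra.
- by exists 0; rewrite rmorph0 normr0 subr0 normr0 lexx ltW.
Qed.

Lemma sq_ge0_gt (e c d : R) : 0 < c -> 0 < d -> 0 <= e -> c - d < e ->
  c ^+ 2 - 2 * c * d < e ^+ 2.
Proof.
move=> c0 d0 e0 h; have [hcd|hcd] := leP 0 (c - d).
  have : (c - d) ^+ 2 < e ^+ 2 by rewrite ltrXn2r.
  nra.
nra.
Qed.

End Det2.
Section Det3.
Variable R : realType.
Local Notation rr := (@ratr R).

Lemma sqrt_le_sq (s o : R) : 0 <= s -> 0 <= o -> Num.sqrt s <= o -> s <= o ^+ 2.
Proof.
move=> s0 o0 h; rewrite -(sqr_sqrtr s0); apply: lerXn2r => //; rewrite nnegrE ?sqrtr_ge0 //.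
Qed.

Lemma sq_approx (a b r eta : R) : 0 <= eta -> `|a| <= r -> `|b - a| <= eta * r ->
  a ^+ 2 - 2 * eta * r ^+ 2 <= b ^+ 2.
Proof.
move=> e0; rewrite !ler_norml => /andP [h1 h2] /andP [h3 h4].
have p1 : 0 <= (r - a) * (eta * r - (b - a)) by apply: mulr_ge0; lra.
have p2 : 0 <= (r + a) * (eta * r + (b - a)) by apply: mulr_ge0; lra.
have p3 : 0 <= (b - a) ^+ 2 by apply: sqr_ge0.
nra.
Qed.

Lemma opnorm_geP m n (B : 'M[R]_(m, n)) (c : R) : 0 < c ->
  (c <= opnorm B) <-> (forall k : nat, exists u : 'cV[rat]_n,
      sqsum (map_mx rr u) <= 1 /\ c ^+ 2 - (k.+1%:R)^-1 < sqsum (B *m map_mx rr u)).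
Proof.
move=> c0; split; last first.
  move=> H; have o0 := opnorm_ge0 B.
  have hsq : c ^+ 2 <= opnorm B ^+ 2.
    rewrite leNgt; apply/negP => hlt.
    have hd : 0 < c ^+ 2 - opnorm B ^+ 2 by rewrite subr_gt0.
    have [k hk] := small_inv hd.
    have [u [hu1 hu2]] := H k.
    have := opnorm_ge B (le1_eucl hu1); rewrite eucl_normE => hs.
    have := sqrt_le_sq (sqsum_ge0 _) o0 hs.
    move=> h; have := lt_le_trans hu2 h; move: hk.
    move: (opnorm B ^+ 2) (k.+1%:R^-1 : R) => x y; lra.
  by move: hsq; rewrite ler_pXn2r // nnegrE ltW.
move=> hc k; set eps : R := (k.+1%:R)^-1.
have e0 : 0 < eps by rewrite invr_gt0 ltr0n.
have d0 : 0 < eps / (4 * c) by rewrite divr_gt0 // mulr_gt0.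
have [_ [v /= hv <-] hve] := sup_adherent d0 (opset_has_sup B).
have hv1 := eucl_le1 hv.
have he : c ^+ 2 - eps / 2 < sqsum (B *m v).
  have := sq_ge0_gt c0 d0 (sqrtr_ge0 _) (le_lt_trans (lerB hc (lexx _)) hve).
  rewrite sqr_sqrtr ?sqsum_ge0 //.
  have -> : 2 * c * (eps / (4 * c)) = eps / 2.
    Timeout 30 field; by rewrite gt_eqF.
  done.
set S := \sum_i rowabs B i ^+ 2.
have S0 : 0 <= S by apply: sumr_ge0 => i _; rewrite sqr_ge0.
set eta := eps / (8 * (1 + S)).
have eta0 : 0 < eta by rewrite divr_gt0 // mulr_gt0 // ltr_pwDl.
have [f hf] := choice (fun k : 'I_n => rat_approx (v k ord0) eta0).
exists (\col_k f k).
have ue : forall k, map_mx rr (\col_k f k) k ord0 = rr (f k) by move=> j; rewrite !mxE.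
split.
  apply: le_trans hv1; apply: ler_sum => j _; rewrite ue.
  rewrite -(real_normK (num_real (rr (f j)))) -(real_normK (num_real (v j ord0))).
  by apply: lerXn2r; rewrite ?nnegrE //; exact: (hf j).1.
have key : sqsum (B *m v) - 2 * eta * S <= sqsum (B *m map_mx rr (\col_k f k)).
  rewrite /sqsum /S mulr_sumr -sumrB; apply: ler_sum => i _.
  apply: sq_approx; first exact: ltW.
    exact: mulmx_entry_le.
  rewrite !mxE -sumrB /rowabs mulr_sumr; apply: (le_trans (ler_norm_sum _ _ _)).
  apply: ler_sum => j _; rewrite ue -mulrBr normrM mulrC ler_wpM2r //.
  exact: (hf j).2.
have hS : 2 * eta * S <= eps / 4.
  rewrite /eta ler_pdivlMr; last by lra.
  have : 0 <= eps * S by rewrite mulr_ge0 // ltW.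
  have -> : 2 * (eps / (8 * (1 + S))) * S * 4 = eps * S / (1 + S).
    Timeout 30 field; lra.
  rewrite ler_pdivrMr; last by lra.
  Timeout 30 nra.
Timeout 30 lra.
Qed.

End Det3.
Section Simple.
Variable R : realType.
Import HBNNSimple.

Lemma exists_simple (mu : probability (measurableTypeR R) R)
  (hmu : (\int[mu]_x ((x ^+ 2)%:E) = +oo)%E) (C : R) :
  exists g : R -> R, (forall y, measurable (g @^-1` [set y])) /\
    finite_set (range g) /\ (forall x, 0 <= g x) /\ (forall x, g x <= x ^+ 2) /\
    (C%:E < sintegral mu g)%E.
Proof.
move: hmu; rewrite ge0_integralE; last by move=> x _; rewrite lee_fin sqr_ge0.
move=> hsup.
apply: contrapT => hno.
have : (ereal_sup [set sintegral mu h | h in [set h : {nnsfun (measurableTypeR R) >-> R} |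
    forall x, ((h x)%:E <= ((fun x : R => (x ^+ 2)%:E) \_ setT) x)%E]] <= C%:E)%E.
  apply: ge_ereal_sup => _ [h /= hh <-].
  rewrite leNgt; apply/negP => hC; apply: hno; exists h; split.
    move=> y; have := measurable_funP h measurableT _ (measurable_set1 y).
    by rewrite setTI.
  split; first exact: (fimfunP h).
  split; first by move=> x; apply: fun_ge0.
  split => //.
  move=> x; have := hh x; rewrite patchT ?inE // lee_fin.
by rewrite hsup leNgt ltry.
Qed.

End Simple.
Section Chernoff.
Variables (R : realType) (mu : probability (measurableTypeR R) R).
Variables (d : measure_display) (T : measurableType d) (P : probability T R).
Variables (I : finType) (Y : I -> T -> R).
Hypotheses (hY : forall i, measurable_fun setT (Y i))
  (hind : mutually_independent P Y)
  (hdist : forall i A, measurable A -> P (Y i @^-1` A) = mu A).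
Variables (g : R -> R) (gm : forall y, measurable (g @^-1` [set y]))
  (gfin : finite_set (range g)) (g0 : forall x, 0 <= g x).

Let s : seq R := finmap.enum_fset (fset_set (range g)).
Let K := size s.
Let y (k : 'I_K) : R := nth 0 s k.
Let L (k : 'I_K) : set R := g @^-1` [set y k].
Let q (k : 'I_K) : R := fine (mu (L k)).

Let s_uniq : uniq s. Proof. exact: finmap.fset_uniq. Qed.

Let in_s x : g x \in s.
Proof. by rewrite in_fset_set // inE; exists x. Qed.

Let gk x : exists k : 'I_K, g x = y k.
Proof.
have hi : (index (g x) s < K)%N by rewrite index_mem in_s.
by exists (Ordinal hi); rewrite /y /= nth_index ?in_s.
Qed.

Let yrange k : exists x, g x = y k.
Proof.
have : y k \in s by rewrite /y mem_nth.
by rewrite in_fset_set // inE => -[x _ <-]; exists x.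
Qed.

Let Lm k : measurable (L k). Proof. exact: gm. Qed.

Let muL k : mu (L k) = (q k)%:E.
Proof.
rewrite /q fineK // ge0_fin_numE //.
by apply: (le_lt_trans (probability_le1 mu (Lm k))); rewrite ltry.
Qed.

Let q0 k : 0 <= q k. Proof. by rewrite /q fine_ge0. Qed.

Let sumq : \sum_k q k <= 1.
Proof.
rewrite -lee_fin -sumEFin.
under eq_bigr do rewrite -muL.
rewrite -(measure_bigsetU_ord mu xpredT (F := L)) //.
  apply: (@probability_le1 _ (measurableTypeR R) R mu).
  by apply: bigsetU_measurable => k _; apply: Lm.
move=> i j _ _ [x [/= hi hj]]; apply/val_inj/eqP.
by rewrite -(nth_uniq 0 (ltn_ord i) (ltn_ord j) s_uniq) -/(y i) -/(y j) -hi -hj.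
Qed.

Let Eg := \sum_k y k * q k.

Lemma sintegral_eq : sintegral mu g = Eg%:E.
Proof.
rewrite sintegralE fsbig_finite //= -/s /Eg -sumEFin.
rewrite (big_nth 0) big_mkord; apply: eq_bigr => k _.
by rewrite EFinM -muL.
Qed.


Let E (σ : {ffun I -> 'I_K}) : set T := \bigcap_(i in [set: I]) (Y i @^-1` L (σ i)).

Let Ym i k : measurable (Y i @^-1` L k).
Proof. by have := hY i measurableT (Lm k); rewrite setTI. Qed.

Let Em σ : measurable (E σ).
Proof. by apply: fin_bigcap_measurable; [exact: finite_finset | move=> i _; exact: Ym]. Qed.

Let PE σ : P (E σ) = (\prod_i q (σ i))%:E.
Proof.
rewrite /E (hind (fun i => Lm (σ i))).
by rewrite -prodEFin; apply: eq_bigr => i _; rewrite hdist ?muL //; exact: Lm.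
Qed.

Let y0 k : 0 <= y k.
Proof. by have [x <-] := yrange k. Qed.

Section Bound.
Variables (a t : R) (t0 : 0 < t) (tg : forall x, t * g x <= 1).

Let cond (σ : {ffun I -> 'I_K}) := \sum_i y (σ i) < a.
Let F (σ : {ffun I -> 'I_K}) := if cond σ then E σ else set0.
Let l := map F (index_enum {ffun I -> 'I_K}).
Let G := \bigcup_(k < size l) nth set0 l k.

Let nthm k : measurable (nth set0 l k).
Proof.
case: (ltnP k (size l)) => hk; last by rewrite nth_default.
have /mapP [σ _ ->] := mem_nth set0 hk.
by rewrite /F; case: ifP => _ //; exact: Em.
Qed.

Let Gm : measurable G.
Proof. by apply: bigcup_measurable => k _; exact: nthm. Qed.

Let PG : (P G <= (\sum_σ (if cond σ then \prod_i q (σ i) else 0))%:E)%E.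
Proof.
apply: le_trans (content_subadditive P (A := G) (F := fun k => nth set0 l k)
  (n := size l) (fun k _ => nthm k) Gm _) _.
  by rewrite /G bigcup_mkord.
rewrite -(big_mkord xpredT (fun k => P (nth set0 l k))) -(big_nth set0 xpredT P).
rewrite big_map -sumEFin le_eqVlt; apply/orP; left; apply/eqP.
apply: eq_bigr => σ _; rewrite /F; case: ifP => _; first exact: PE.
exact: measure0.
Qed.

Let Gc w : ~ G w -> a <= \sum_i g (Y i w).
Proof.
move=> hw; rewrite leNgt; apply/negP => hlt; apply: hw.
have [f hf] := choice (fun i => gk (Y i w)).
pose σ := [ffun i => f i].
have hE : E σ w by move=> i _; rewrite /= /L /= ffunE -hf.
have hc : cond σ.
  rewrite /cond; move: hlt; rewrite (eq_bigr (fun i => y (σ i))) // => i _.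
  by rewrite ffunE -hf.
exists (index σ (index_enum {ffun I -> 'I_K})).
  by rewrite /= size_map index_mem mem_index_enum.
rewrite (nth_map σ) ?index_mem ?mem_index_enum // nth_index ?mem_index_enum //.
by rewrite /F hc.
Qed.

Let Phi := \sum_k expR (- (t * y k)) * q k.

Let sum_bound : \sum_σ (if cond σ then \prod_i q (σ i) else 0) <= expR (t * a) * \prod_(i : I) Phi.
Proof.
rewrite /Phi bigA_distr_bigA mulr_sumr; apply: ler_sum => σ _.
case: ifP => hc; last first.
  apply: mulr_ge0; first exact: expR_ge0.
  by apply: prodr_ge0 => i _; apply: mulr_ge0 => //; exact: expR_ge0.
rewrite big_split /= mulrA -[X in X <= _]mul1r ler_wpM2r //.
  by apply: prodr_ge0 => i _.
rewrite -expR_sum -expRD.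
have hx : 0 <= t * a + \sum_i - (t * y (σ i)).
  rewrite sumrN -mulr_sumr -mulrBr; apply: mulr_ge0; first exact: ltW.
  by rewrite subr_ge0 ltW.
by apply: le_trans (expR_ge1Dx _); rewrite lerDl.
Qed.

Let Phi_bound : Phi <= 1 - t / 2 * Eg.
Proof.
have ex : forall x : R, 0 <= x -> x <= 1 -> expR (- x) <= 1 - x / 2.
  move=> x x0 x1; rewrite expRN -div1r ler_pdivrMr ?expR_gt0 //.
  have h1 := expR_ge1Dx x.
  have h2 : 0 <= 1 - x / 2 by lra.
  have := ler_wpM2l h2 h1; nra.
apply: (@le_trans _ _ (\sum_k (1 - t * y k / 2) * q k)).
  apply: ler_sum => k _; apply: ler_wpM2r => //; apply: ex.
    by apply: mulr_ge0 => //; exact: ltW.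
  by have [x <-] := yrange k; exact: tg.
have -> : \sum_k (1 - t * y k / 2) * q k = \sum_k q k - t / 2 * Eg.
  rewrite /Eg mulr_sumr -sumrB; apply: eq_bigr => k _; ring.
by rewrite lerD2r.
Qed.

Lemma chernoff_ex : exists G : set T, measurable G /\
  (forall w, ~ G w -> a <= \sum_i g (Y i w)) /\
  (P G <= (expR (t * a) * \prod_(i : I) expR (- (t / 2 * fine (sintegral mu g))))%:E)%E.
Proof.
exists G; split; first exact: Gm.
split; first exact: Gc.
apply: le_trans PG _; rewrite lee_fin; apply: le_trans sum_bound _.
apply: ler_wpM2l; first exact: expR_ge0.
apply: ler_prod => i _; apply/andP; split; first by apply: sumr_ge0 => k _; apply: mulr_ge0 => //; exact: expR_ge0.
rewrite sintegral_eq /=; apply: le_trans Phi_bound _.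
by apply: le_trans (expR_ge1Dx _); rewrite lexx.
Qed.

End Bound.
End Chernoff.

Lemma g_bounded (R : realType) (g : R -> R) (gfin : finite_set (range g))
  (g0 : forall x, 0 <= g x) : exists B : R, forall x, g x <= B.
Proof.
pose s : seq R := finmap.enum_fset (fset_set (range g)).
exists (\sum_(v <- s) v) => x.
have hx : g x \in s by rewrite in_fset_set // inE; exists x.
rewrite (bigD1_seq (g x)) //= ?finmap.fset_uniq // lerDl.
rewrite big_seq_cond; apply: sumr_ge0 => v /andP [hv _].
by move: hv; rewrite in_fset_set // inE => -[z _ <-].
Qed.
Lemma opnorm_frob (R : realType) m n (B : 'M[R]_(m, n)) (c : R) : (0 < n)%N -> 0 <= c ->
  n%:R * c ^+ 2 <= \sum_j \sum_i B i j ^+ 2 -> c <= opnorm B.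
Proof.
move=> n0 c0 h; rewrite leNgt; apply/negP => hlt.
have o0 := opnorm_ge0 B.
have hcol : forall j, \sum_i B i j ^+ 2 <= opnorm B ^+ 2.
  move=> j; apply: sqrt_le_sq => //; last exact: opnorm_col.
  by apply: sumr_ge0 => i _; rewrite sqr_ge0.
have : \sum_(j < n) \sum_i B i j ^+ 2 <= \sum_(j < n) opnorm B ^+ 2 by apply: ler_sum.
rewrite sumr_const card_ord -mulr_natl => h2.
have h3 : opnorm B ^+ 2 < c ^+ 2 by rewrite ltrXn2r // nnegrE.
have hn : 0 < n%:R :> R by rewrite ltr0n.
have := le_trans h h2; nra.
Qed.
Lemma opnorm_set_measurable d (T : measurableType d) (R : realType) m
  (X : 'I_m -> 'I_m -> T -> R) (hX : forall i j, measurable_fun setT (X i j))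
  (c : R) : 0 < c -> measurable [set w | c <= opnorm (\matrix_(i, j) X i j w)].
Proof.
move=> c0.
pose F (k : nat) (u : 'cV[rat]_m) := [set w | sqsum (map_mx (@ratr R) u) <= 1 /\
  c ^+ 2 - (k.+1%:R)^-1 < sqsum ((\matrix_(i, j) X i j w) *m map_mx (@ratr R) u)].
have -> : [set w | c <= opnorm (\matrix_(i, j) X i j w)] =
    \bigcap_(k in [set: nat]) \bigcup_(u in [set: 'cV[rat]_m]) F k u.
  apply/seteqP; split => w /=.
    by move=> /(opnorm_geP _ c0) H k _; have [u hu] := H k; exists u.
  by move=> H; apply/(opnorm_geP _ c0) => k; have [u _ hu] := H k Logic.I; exists u.
apply: bigcap_measurableType => k _.
apply: countable_bigcupT_measurable; first exact: countableP.
move=> u; case: (boolP (sqsum (map_mx (@ratr R) u) <= 1)) => hu; last first.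
  have -> : F k u = set0 by apply/seteqP; split => w //= [h _]; rewrite h in hu.
  exact: measurable0.
pose f := fun w => \sum_i (\sum_j X i j w * ratr (u j ord0)) ^+ 2.
have mf : measurable_fun setT f.
  apply: measurable_sum => i; apply: measurable_realfun.measurable_funX; apply: measurable_sum => j.
  by apply: measurable_realfun.measurable_funM => //; exact: measurable_cst.
have -> : F k u = f @^-1` `]c ^+ 2 - (k.+1%:R)^-1, +oo[.
  apply/seteqP; split => w /=; rewrite in_itv /= andbT.
    move=> [_ h]; move: h; rewrite /sqsum /f.
    by under eq_bigr do rewrite !mxE; under eq_bigr do under eq_bigr do rewrite !mxE.
  move=> h; split => //; move: h; rewrite /sqsum /f.
  by under [X in _ -> _ < X]eq_bigr do rewrite !mxE; under [X in _ -> _ < X]eq_bigr do under eq_bigr do rewrite !mxE.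
by have := mf measurableT _ (measurable_itv `]c ^+ 2 - (k.+1%:R)^-1, +oo[); rewrite setTI.
Qed.
Unset Implicit Arguments.

Theorem mainTheorem19 (R : realType) (mu : probability (measurableTypeR R) R)
  (hmu : (\int[mu]_x ((x ^+ 2)%:E) = +oo)%E) (M : R) (hM : 0 < M) :
  exists m0 : nat, forall m : nat, (m0 < m)%N ->
  forall (d : measure_display) (T : measurableType d) (P : probability T R)
    (X : 'I_m -> 'I_m -> T -> R),
    (forall i j, measurable_fun setT (X i j)) ->
    mutually_independent P (fun ij : 'I_m * 'I_m => X ij.1 ij.2) ->
    (forall i j A, measurable A -> P (X i j @^-1` A) = mu A) ->
    ((1 - expR (- (M ^+ 2 * m%:R)))%:E <=
      P [set w | (M * Num.sqrt (m%:R) <= opnorm (\matrix_(i, j) X i j w))%R])%E.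
Proof.
have [g [gm [gfin [g0 [gle gint]]]]] := exists_simple hmu (4 * M ^+ 2).
have hfin : sintegral mu g = (fine (sintegral mu g))%:E by rewrite sintegral_eq.
set Eg := fine (sintegral mu g) in hfin.
have hEg : 4 * M ^+ 2 < Eg by rewrite -lte_fin -hfin.
have [Bd hBd] := g_bounded gfin g0.
exists (Num.trunc Bd) => m hm d T P X hX hind hdist.
have hmR : Bd < m%:R.
  apply: lt_le_trans (truncnS_gt Bd) _; by rewrite ler_nat.
have Bd0 : 0 <= Bd by apply: le_trans (hBd 0).
have m0 : (0 < m)%N by apply: leq_ltn_trans hm.
have mR0 : 0 < m%:R :> R by rewrite ltr0n.
set t : R := (m%:R)^-1.
have t0 : 0 < t by rewrite invr_gt0.
have tg : forall x, t * g x <= 1.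
  move=> x; rewrite /t mulrC ler_pdivrMr // mul1r.
  exact: ltW (le_lt_trans (hBd x) hmR).
pose Y := fun ij : 'I_m * 'I_m => X ij.1 ij.2.
have hY : forall ij, measurable_fun setT (Y ij) by move=> ij; exact: hX.
have hdY : forall ij A, measurable A -> P (Y ij @^-1` A) = mu A.
  by move=> ij A hA; exact: hdist.
set a : R := M ^+ 2 * (m%:R) ^+ 2.
have [G [Gm [Gc PG]]] := chernoff_ex hY hind hdY gm gfin g0 a t0 tg.
set S := [set w | M * Num.sqrt m%:R <= opnorm (\matrix_(i, j) X i j w)].
have c0 : 0 < M * Num.sqrt m%:R by rewrite mulr_gt0 // sqrtr_gt0.
have Sm : measurable S by apply: opnorm_set_measurable.
have GS : ~` G `<=` S.
  move=> w /Gc ha; rewrite /S /=.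
  apply: opnorm_frob => //; first exact: ltW.
  rewrite exprMn sqr_sqrtr ?ler0n //.
  have -> : m%:R * (M ^+ 2 * m%:R) = a by rewrite /a; ring.
  apply: le_trans ha _.
  rewrite exchange_big pair_big /=; apply: ler_sum => -[i j] _ /=.
  by rewrite mxE.
have hPS : (P (~` G) <= P S)%E.
  by apply: le_measure => //; rewrite inE //; exact: measurableC.
apply: le_trans hPS; rewrite probability_setC //.
have PG0 : (0 <= P G)%E by [].
have PGfin : P G = (fine (P G))%:E.
  rewrite fineK // ge0_fin_numE //.
  by apply: (le_lt_trans (probability_le1 P Gm)); rewrite ltry.
move: PG; rewrite PGfin -EFinB lee_fin lee_fin => hp.
rewrite lerD2l lerN2; apply: le_trans hp _.
rewrite -expR_sum -expRD ler_expR sumr_const card_prod card_ord.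
rewrite -/Eg -[_ *+ (m * m)%N]mulr_natr natrM /a /t.
have hE : 4 * M ^+ 2 * m%:R <= Eg * m%:R by rewrite ler_pM2r // ltW.
have -> : (m%:R)^-1 * (M ^+ 2 * m%:R ^+ 2) + - ((m%:R)^-1 / 2 * Eg) * (m%:R * m%:R)
   = M ^+ 2 * m%:R - Eg * m%:R / 2.
  by field; rewrite gt_eqF.
lra.
Qed.
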